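(* For positive integers $n$ and $m$, $\chi_{ld}(F_n+\overline{K_{m}})=2n+2$.
   Context: All graphs are finite, simple and undirected. For a graph $G=(V,E)$ of order $N$ without isolated vertices, a bijection $f\colon V\to\{1,2,\dots,N\}$ is a local distance antimagic labeling if $w(u)\neq w(v)$ for every edge $uv$, where $w(u)=\sum_{x\in N(u)}f(x)$ and $N(u)$ is the open neighborhood of $u$. $\chi_{ld}(G)$ is the minimum number of distinct values of $w$ over all local distance antimagic labelings of $G$. The friendship graph $F_n$ consists of $n$ triangles sharing one common vertex $c$ (vertices $c,u_i,v_i$, $1\le i\le n$, with edges $cu_i, cv_i, u_iv_i$), i.e. $F_n=nK_2+K_1$. $\overline{K_m}$ is the edgeless graph on $m$ vertices. $G+H$ is the join: the disjoint union of $G$ and $H$ plus all edges between $V(G)$ and $V(H)$. *)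

(* Defs.v *)
From mathcomp Require Import all_boot.
Set Implicit Arguments. Unset Strict Implicit. Unset Printing Implicit Defensive.

Definition simple_graph (T : finType) (e : rel T) : Prop :=
  symmetric e /\ irreflexive e.

Definition no_isolated (T : finType) (e : rel T) : Prop :=
  forall u : T, exists v : T, e u v.

(* Friendship graph F_n: None = centre c, Some (i,false) = u_i, Some (i,true) = v_i. *)
Definition friend_vert (n : nat) : finType := option ('I_n * bool).

Definition friend_rel (n : nat) : rel (friend_vert n) :=
  fun x y => match x, y with
  | None, Some _ => true
  | Some _, None => true
  | Some (i, b), Some (j, b') => (i == j) && (b != b')
  | None, None => false
  end.

Definition edgeless_rel (m : nat) : rel 'I_m := fun _ _ => false.

Definition join_rel (T1 T2 : finType) (e1 : rel T1) (e2 : rel T2) : rel (T1 + T2) :=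
  fun x y => match x, y with
  | inl a, inl b => e1 a b
  | inr a, inr b => e2 a b
  | _, _ => true
  end.

Definition is_labeling (T : finType) (f : T -> nat) : Prop :=
  injective f /\ forall x, 1 <= f x <= #|T|.

Definition weight (T : finType) (e : rel T) (f : T -> nat) (u : T) : nat :=
  \sum_(x : T | e u x) f x.

Definition local_dist_antimagic (T : finType) (e : rel T) (f : T -> nat) : Prop :=
  is_labeling f /\ forall u v, e u v -> weight e f u != weight e f v.

Definition num_colors (T : finType) (e : rel T) (f : T -> nat) : nat :=
  size (undup [seq weight e f u | u <- enum T]).

Definition is_chi_ld (T : finType) (e : rel T) (k : nat) : Prop :=
  (exists f, local_dist_antimagic e f /\ num_colors e f = k) /\
  (forall f, local_dist_antimagic e f -> k <= num_colors e f).

Arguments friend_rel n : clear implicits.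
Arguments edgeless_rel m : clear implicits.

(* Main.v *)
Require Import Defs.
From mathcomp Require Import all_boot zify.
Set Implicit Arguments. Unset Strict Implicit.

Lemma big_opt (T: finType) (F: option T -> nat) : \sum_x F x = F None + \sum_t F (Some t).
Proof.
rewrite (bigD1 None) //=; congr (_ + _).
rewrite (reindex_omap Some (fun x => x)) //=.
  by apply: eq_bigl => t; rewrite eqxx.
by case.
Qed.

Section W.
Variables (n m : nat).
Let T : finType := (friend_vert n + 'I_m)%type.
Let e : rel T := join_rel (friend_rel n) (edgeless_rel m).
Variable f : T -> nat.
Let U := \sum_(p : 'I_n * bool) f (inl (Some p)).
Let B := \sum_(j : 'I_m) f (inr j).
Let C := f (inl None).

Lemma w_inr j : weight e f (inr j) = C + U.
Proof.
rewrite /weight big_sumType /= [X in _ + X]big_pred0 // addn0 big_opt.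
done.
Qed.

Lemma w_c : weight e f (inl None) = U + B.
Proof.
rewrite /weight big_sumType /= big_mkcond big_opt /=.
by rewrite add0n.
Qed.

Lemma w_uv i b : weight e f (inl (Some (i, b))) = C + f (inl (Some (i, ~~ b))) + B.
Proof.
rewrite /weight big_sumType /= big_mkcond big_opt /=; congr (_ + _ + _).
rewrite (bigD1 (i, ~~ b)) //= eqxx /=.
have -> : (b != ~~ b) = true by case: b.
rewrite big1 ?addn0 //.
case=> i' b' /=; rewrite xpair_eqE.
by rewrite eq_sym; case: (i == i') => //=; case: b; case: b'.
Qed.
End W.

Section Count.
Variables (n m : nat) (j0 : 'I_m).
Let T : finType := (friend_vert n + 'I_m)%type.
Let e : rel T := join_rel (friend_rel n) (edgeless_rel m).

Lemma count_colors f : local_dist_antimagic e f -> num_colors e f = 2 * n + 2.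
Proof.
move=> [[finj _] Hanti].
set w := weight e f.
pose V0 : seq T := inr j0 :: [seq inl x | x <- enum (friend_vert n)].
have szV : size V0 = 2 * n + 2.
  rewrite /= size_map -cardE card_option card_prod card_ord card_bool.
  by rewrite -addn1 addnC mul2n -addnn; rewrite /=; lia.
have winj : {in V0 &, injective w}.
  have adj : forall x y, e x y -> w x = w y -> x = y.
    by move=> x y /Hanti /eqP.
  move=> x y; rewrite !inE => /orP[/eqP->|/mapP[a _ ->]] /orP[/eqP->|/mapP[b _ ->]] //.
  - by move/(adj (inr j0) (inl b) isT).
  - by move/(adj (inl a) (inr j0) isT).
  case: a => [[i c]|]; case: b => [[i' c']|] //.
  - rewrite /w !w_uv => /eqP; rewrite !eqn_add2r !eqn_add2l => /eqP /finj [-> /(congr1 negb)].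
    by rewrite !negbK => ->.
  - by move/(adj (inl (Some (i, c))) (inl None) isT).
  - by move/(adj (inl None) (inl (Some (i', c'))) isT).
have uV : uniq (map w V0).
  rewrite (map_inj_in_uniq winj) /= map_inj_uniq ?enum_uniq; last by move=> a b [].
  by rewrite andbT; apply/mapP => -[].
apply/eqP; rewrite eqn_leq; apply/andP; split.
  rewrite -szV -(size_map w); apply: uniq_leq_size; first exact: undup_uniq.
  move=> z; rewrite mem_undup => /mapP[x _ ->].
  case: x => [a|j].
    by apply: map_f; rewrite inE; apply/orP; right; apply: map_f; rewrite mem_enum.
  rewrite /w w_inr -(w_inr _ j0); apply: map_f; exact: mem_head.
rewrite -szV -(size_map w); apply: uniq_leq_size => // z /mapP[x _ ->].
by rewrite mem_undup; apply: map_f; rewrite mem_enum.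
Qed.
End Count.

Lemma sum_lin k c d : (\sum_(i < k) (c + d * i)) * 2 = c * k * 2 + d * k * (k - 1).
Proof.
elim: k => [|k IH]; first by rewrite big_ord0 !muln0.
rewrite big_ord_recr /= mulnDl IH. case: k {IH} => [|k]; first by rewrite !muln0 /=; lia.
rewrite !subSS subn0; nia.
Qed.

Lemma r1 n m U B : 0 < n -> n < m -> U * 2 = (2 * 2 + 1) * n * 2 + 4 * n * (n - 1) ->
  B * 2 = (2 * n + 2) * m * 2 + 1 * m * (m - 1) -> U < B.
Proof.
move=> hn hnm HU HB.
have h1 : (2 * n + 2) * (n + 1) <= (2 * n + 2) * m by rewrite leq_mul2l; lia.
have h2 : 0 <= 1 * m * (m - 1) by [].
case: n hn hnm HU HB h1 => // n _ hnm HU HB h1.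
rewrite subSS subn0 in HU. nia.
Qed.
Lemma r2 n m U B : 0 < n -> 0 < m -> m <= n -> U * 2 = (2 * (m + 2) + 1) * n * 2 + 4 * n * (n - 1) ->
  B * 2 = 2 * m * 2 + 1 * m * (m - 1) -> B + (m + 2) + 2 * n - 1 < U.
Proof.
move=> hn hm hmn HU HB.
have h1 : m * m <= m * n by rewrite leq_mul2l hmn orbT.
case: n hn hmn HU h1 => // n _ hmn HU h1.
case: m hm hmn HB h1 HU => // m _ hmn HB h1 HU.
rewrite subSS subn0 in HU; rewrite subSS subn0 in HB. nia.
Qed.
Lemma f1 n a U : 0 < n -> 2 <= a -> U * 2 = (2 * a + 1) * n * 2 + 4 * n * (n - 1) -> a + 2 * n + 1 <= U.
Proof.
move=> hn ha HU.
case: n hn HU => // n _ HU. rewrite subSS subn0 in HU. nia.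
Qed.

Definition la (n m : nat) := if n < m then 2 else m + 2.
Definition lb (n m : nat) := if n < m then 2 * n + 2 else 2.

Definition lab {n m : nat} (x : (friend_vert n + 'I_m)%type) : nat :=
  match x with
  | inl None => 1
  | inl (Some (i, b)) => la n m + (2 * i + b)
  | inr j => lb n m + j
  end.

Lemma lab_antimagic n m : 0 < n -> 0 < m ->
  local_dist_antimagic (join_rel (friend_rel n) (edgeless_rel m)) (@lab n m).
Proof.
move=> hn hm.
set a := la n m; set bb := lb n m.
have Hab : (a = 2 /\ bb = 2 * n + 2 /\ n < m) \/ (a = m + 2 /\ bb = 2 /\ m <= n).
  rewrite /a /bb /la /lb; case: ltnP => H; [left|right]; done.
have HU : (\sum_p @lab n m (inl (Some p))) * 2 = (2 * a + 1) * n * 2 + 4 * n * (n - 1).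
  rewrite (eq_bigr (fun p : 'I_n * bool => @lab n m (inl (Some (p.1, p.2))) : nat)); last by case.
  rewrite -(pair_bigA _ (fun i b => @lab n m (inl (Some (i, b))) : nat)) /=.
  rewrite (eq_bigr (fun i : 'I_n => (2 * a + 1) + 4 * i)); first by rewrite sum_lin.
  move=> i _; rewrite big_bool /= -/a; lia.
have HB : (\sum_j @lab n m (inr j)) * 2 = bb * m * 2 + 1 * m * (m - 1).
  rewrite -sum_lin; congr (_ * 2); apply: eq_bigr => j _ /=; rewrite mul1n.
  done.
have Huv : forall (i : 'I_n) (b : bool), a <= @lab n m (inl (Some (i, b))) <= a + 2 * n - 1.
  move=> i b /=; rewrite -/a; have := ltn_ord i; case: b => /=; lia.
have Hw : forall j : 'I_m, bb <= @lab n m (inr j) <= bb + m - 1.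
  move=> j /=; rewrite -/bb; have := ltn_ord j; lia.
set U := \sum_p @lab n m (inl (Some p)) in HU.
set B := \sum_j @lab n m (inr j) in HB.
split.
  split.
    move=> [[[i b]|]|j] [[[i' b']|]|j'] //=; rewrite -/a -/bb.
    - move=> H; have Hi : i = i' :> nat by case: b b' H => [] [] /=; lia.
      have Hb : b = b' by case: b b' H => [] [] /=; lia.
      by rewrite Hb (val_inj Hi).
    - lia.
    - have := ltn_ord i; have := ltn_ord j'; case: b; case: Hab; lia.
    - lia.
    - lia.
    - have := ltn_ord i'; have := ltn_ord j; case: b'; case: Hab; lia.
    - lia.
    - by move=> H; rewrite (val_inj (_ : nat_of_ord j = j')) //; lia.
  move=> x; rewrite card_sum card_option card_prod !card_ord card_bool.
  case: x => [[[i b]|]|j] /=; rewrite -/a -/bb.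
  - have := ltn_ord i; case: b; case: Hab; lia.
  - lia.
  - have := ltn_ord j; case: Hab; lia.
have HF1 : a + 2 * n + 1 <= U by apply: (f1 hn _ HU); case: Hab; lia.
have HF2 : 2 <= B.
  have : 2 * 1 <= bb * m by apply: leq_mul => //; case: Hab; lia.
  lia.
have HF3 : U < B \/ B + a + 2 * n - 1 < U.
  case: Hab => [[Ha [Hb Hr]]|[Ha [Hb Hr]]].
    by left; rewrite Ha Hb in HU HB; apply: (r1 hn Hr HU HB).
  by right; rewrite Ha; rewrite Ha Hb in HU HB; apply: (r2 hn hm Hr HU HB).
move: Hab HF1 HF3 Huv Hw; rewrite /a /bb => Hab HF1 HF3 Huv Hw.
move=> [[[i b]|]|j] [[[i' b']|]|j'] //=.
- case/andP=> /eqP <- Hbb; rewrite !w_uv -/U -/B; apply/eqP.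
  rewrite /=; case: b b' Hbb => [] [] //= _; lia.
- rewrite w_uv w_c -/U -/B /=; move=> _; apply/eqP => H.
  have /= := Huv i (~~ b); lia.
- rewrite w_uv w_inr -/U -/B /=; move=> _; apply/eqP => H.
  have /= := Huv i (~~ b); lia.
- rewrite w_uv w_c -/U -/B /=; move=> _; apply/eqP => H.
  have /= := Huv i' (~~ b'); lia.
- rewrite w_c w_inr -/U -/B /=; move=> _; apply/eqP => H.
  lia.
- rewrite w_uv w_inr -/U -/B /=; move=> _; apply/eqP => H.
  have /= := Huv i' (~~ b'); lia.
- rewrite w_c w_inr -/U -/B /=; move=> _; apply/eqP => H.
  lia.
Qed.

Unset Implicit Arguments.

Theorem mainTheorem3 (n m : nat) (hn : 0 < n) (hm : 0 < m) :
  is_chi_ld (join_rel (friend_rel n) (edgeless_rel m)) (2 * n + 2).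
Proof.
split.
  exists (@lab n m); split; first exact: lab_antimagic.
  exact: (count_colors (Ordinal hm) (lab_antimagic hn hm)).
move=> f Hf; by rewrite (count_colors (Ordinal hm) Hf).
Qed.
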